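(* Let $D$ be a $3$-dicritical digraph that is not a bidirected odd cycle. Then the bidirected part $B(D)$ is a forest.
   Context: Digraphs are finite, with no loops and no parallel arcs; a digon is a pair of arcs $uv,vu$. A $2$-dicolouring of $D$ is a map $V(D)\to\{1,2\}$ such that each colour class induces an acyclic subdigraph. $D$ is $3$-dicritical if $D$ has no $2$-dicolouring but every proper subdigraph has one. The bidirected part $B(D)$ is the undirected graph on $V(D)$ in which $u,v$ are adjacent iff $D$ contains both arcs $uv$ and $vu$. A bidirected odd cycle is the digraph obtained from an odd (undirected) cycle by replacing every edge with a digon. *)

(* Defs.v *)
From mathcomp Require Import all_boot.
Set Implicit Arguments. Unset Strict Implicit. Unset Printing Implicit Defensive.

(* A digraph on a finite vertex type V is given by its arc relation
   [a : rel V] (no parallel arcs by construction); loopless = irreflexive. *)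
Definition loopless (V : finType) (a : rel V) : Prop := forall x, ~~ a x x.

Definition subdigraph (V : finType) (a : rel V) (S : {set V}) (A : rel V) : Prop :=
  forall u v, A u v -> [/\ a u v, u \in S & v \in S].

Definition proper_subdigraph (V : finType) (a : rel V) (S : {set V}) (A : rel V)
  : Prop :=
  subdigraph a S A /\ (S != setT \/ exists u v, a u v && ~~ A u v).

Definition has_dicycle_in (V : finType) (S : {set V}) (A : rel V) (P : pred V)
  : Prop :=
  exists c : seq V, [/\ c != [::], uniq c, all (fun x => (x \in S) && P x) c
                       & cycle A c].

(* A 2-dicolouring of (S, A): colours {1,2} encoded by bool; each colour class
   induces an acyclic subdigraph. *)
Definition two_dicolouring (V : finType) (S : {set V}) (A : rel V) (f : V -> bool)
  : Prop :=
  forall i : bool, ~ has_dicycle_in S A (fun x => f x == i).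

Definition two_dicolourable (V : finType) (S : {set V}) (A : rel V) : Prop :=
  exists f : V -> bool, two_dicolouring S A f.

Definition dicritical3 (V : finType) (a : rel V) : Prop :=
  ~ two_dicolourable setT a /\
  forall S A, proper_subdigraph a S A -> two_dicolourable S A.

Definition bidirected_part (V : finType) (a : rel V) : rel V :=
  fun u v => a u v && a v u.

(* An undirected simple graph g (symmetric relation) is a forest iff it
   contains no cycle: no sequence of >= 3 distinct vertices that is
   cyclically consecutive along edges. *)
Definition forest (V : finType) (g : rel V) : Prop :=
  ~ exists c : seq V, [/\ 3 <= size c, uniq c & cycle g c].

(* D is (isomorphic to) a bidirected odd cycle: its vertices can be listed
   cyclically as c (odd length >= 3) and its arcs are exactly the pairs of
   cyclically consecutive vertices, in both directions. *)
Definition bidirected_odd_cycle (V : finType) (a : rel V) : Prop :=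
  exists c : seq V, [/\ uniq c, forall x, x \in c, odd (size c), 3 <= size c
    & forall u v, a u v = (v == next c u) || (u == next c v)].

(* Main.v *)
Require Import Defs.
From mathcomp Require Import all_boot.

Set Implicit Arguments. Unset Strict Implicit. Unset Printing Implicit Defensive.

Lemma path_parity (V : eqType) (f : V -> bool) z s :
  path (fun u w => f u != f w) z s -> f (last z s) = f z (+) odd (size s).
Proof.
elim: s z => [|w s IH] z /=; first by rewrite addbF.
move=> /andP [hzw /IH ->]; move: hzw; case: (f z); case: (f w); case: (odd (size s)) => //= _.
Qed.

Lemma cycle_parity (V : eqType) (f : V -> bool) c :
  cycle (fun u w => f u != f w) c -> odd (size c) = false.
Proof.
case: c => // x q /= /path_parity; rewrite last_rcons size_rcons /=.
by case: (f x); case: (odd (size q)).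
Qed.

Lemma digon_bichrom (V : finType) (S : {set V}) (A : rel V) (f : V -> bool) u w :
  two_dicolouring S A f -> u \in S -> w \in S -> u != w -> A u w -> A w u ->
  f u != f w.
Proof.
move=> hf uS wS uw huw hwu; apply/negP => /eqP e.
apply: (hf (f u)); exists [:: u; w]; split => //=.
- by rewrite inE uw.
- by rewrite uS wS e eqxx.
- by rewrite huw hwu.
Qed.

Theorem proposition28 (V : finType) (a : rel V) :
  loopless a -> dicritical3 a -> ~ bidirected_odd_cycle a ->
  forest (bidirected_part a).
Proof.
move=> hl [hnc hcrit] hnb [c [hsz hu hcy]].
have neq : forall u w, a u w -> u != w.
  by move=> u w h; apply/negP => /eqP e; subst w; move: (hl u); rewrite h.
case: (boolP (odd (size c))) => hodd.
- pose A := fun u v => [&& u \in c, v \in c & (v == next c u) || (u == next c v)].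
  have hsub : subdigraph a [set z in c] A.
    move=> u v /and3P [uc vc /orP [/eqP -> | /eqP ->]]; rewrite !inE;
      [split => //; last by rewrite mem_next |].
    + by case/andP: (next_cycle hcy uc).
    + split; [by case/andP: (next_cycle hcy vc) | by rewrite mem_next | by []].
  case: (boolP (([set z in c] != setT) || [exists u, exists v, a u v && ~~ A u v])) => hp.
  + have [psi hpsi] : two_dicolourable [set z in c] A.
      apply: hcrit; split => //; case/orP: hp; first by left.
      by move=> /existsP [u /existsP [v h]]; right; exists u, v.
    have hr : cycle (fun u w => psi u != psi w) c.
      apply: (sub_in_cycle (P := mem c) (e := frel (next c))); last first.
        - exact: cycle_next.
        - by apply/allP.
      move=> u w uc wc /= /eqP e; subst w.
      have ha : a u (next c u) by case/andP: (next_cycle hcy uc).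
      apply: (digon_bichrom hpsi); rewrite ?inE ?mem_next //; first exact: neq ha.
      + by rewrite /A uc mem_next uc eqxx.
      + by rewrite /A uc mem_next uc eqxx orbT.
    by move: hodd; rewrite (cycle_parity hr).
  + move: hp; rewrite negb_or negbK => /andP [/eqP hS hnex].
    apply: hnb; exists c; split => //.
    * by move=> x; move: (in_setT x); rewrite -hS inE.
    * move=> u v; apply/idP/idP.
        move=> h; have : A u v.
          by apply/negPn/negP => hn; move/negP: hnex; apply; apply/existsP; exists u;
             apply/existsP; exists v; rewrite h.
        by case/and3P.
      have allc : forall x, x \in c by move=> x; move: (in_setT x); rewrite -hS inE.
      case/orP => /eqP ->.
        by case/andP: (next_cycle hcy (allc u)).
      by case/andP: (next_cycle hcy (allc v)).
- case: c hsz hu hcy hodd => [|x [|y p]] //= hsz hu hcy hodd.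
  have hxy : a x y && a y x by case/andP: hcy.
  pose A := fun u v => a u v && ~~ ((u == x) && (v == y)).
  have [phi hphi] : two_dicolourable setT A.
    apply: hcrit; split.
      by move=> u v /andP [h _]; rewrite !inE.
    right; exists x, y; rewrite /A !eqxx /=; by case/andP: hxy => ->.
  have p0 : p != [::] by case: p hsz {hu hcy hodd}.
  move: hu; rewrite /= !inE negb_or => /andP [/andP [xy xp] /andP [yp up]].
  move: hcy => /andP [_]; rewrite rcons_path => /andP [hp hl'].
  have hdig : forall u w, u != x -> w != x -> a u w -> a w u -> phi u != phi w.
    move=> u w ux wx h1 h2; apply: (digon_bichrom hphi); rewrite ?inE //.
    + exact: neq h1.
    + by rewrite /A h1 (negbTE ux).
    + by rewrite /A h2 (negbTE wx).
  have hr : path (fun u w => phi u != phi w) y p.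
    apply: (sub_in_path (P := predC1 x) (e := bidirected_part a)) => //.
      by move=> u w ux wx /andP [h1 h2]; apply: hdig.
    rewrite /= eq_sym xy /=; apply/allP => z zp /=.
    by apply/negP => /eqP e; subst z; rewrite zp in xp.
  have hlast : last y p != x.
    apply/negP => /eqP e; move: (mem_last y p); rewrite e inE (negbTE xy) /=.
    by rewrite (negbTE xp).
  have lp : last y p != y.
    apply/negP => /eqP e; case: p p0 yp e {hp hl' hr hlast up xp hodd hsz} => // z q _.
    rewrite /= inE negb_or => /andP [yz yq] e.
    by move: (mem_last z q); rewrite e inE (negbTE yz) (negbTE yq).
  have h3 : phi (last y p) != phi x.
    case/andP: hl' => h1 h2; apply: (digon_bichrom hphi) => //.
    + by rewrite /A h1 (negbTE hlast).
    + by rewrite /A h2 eqxx /= (negbTE lp).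
  have ephi : phi x != phi y.
    move: h3; rewrite (path_parity hr).
    move: hodd; rewrite negbK => /negbTE ->; rewrite addbF.
    by apply: contra => /eqP ->.
  apply: hnc; exists phi => i [q [q0 uq allq cq]].
  apply: (hphi i); exists q; split => //.
  apply: (sub_in_cycle (P := fun z => phi z == i) (e := a)) => //.
    move=> u w /= /eqP pu /eqP pw h; rewrite /A h /=.
    apply/negP => /andP [/eqP ex /eqP ey]; subst u w.
    by move: ephi; rewrite pu pw eqxx.
  by apply/allP => z zq; move/allP: allq => /(_ z zq) /andP [_ ->].
Qed.
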